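(* Let $M,N\ge 0$. For every interval of rank two in the poset of shuffles $W_{MN}$, the labeling $\Lambda$ behaves in one of the following two ways. (1) If the interval is isomorphic to $C_2\times C_2$, then its two maximal chains $c_1,c_2$, with labels induced by $\Lambda$ (i.e., the labels of the two coverings in the interval, computed within any maximal chain of $W_{MN}$ containing the given rank-two subchain together with a fixed chain below and a fixed chain above the interval), satisfy $(l_1,l_2)$ for $c_1$ and $(l_2,l_1)$ for $c_2$, where $l_1\neq l_2$ are letters of $\mathcal{A}\cup\mathcal{X}$. (2) If the interval is isomorphic to $\Pi_3$, then its three maximal chains $\gamma_1,\gamma_2,\gamma_3$ have induced labels $(x_j,l)$, $(l,x_j)$ and $(x_j,x_j)$ respectively, for some $x_j\in\mathcal{X}$ and some $l\in\mathcal{A}\cup(\mathcal{X}\setminus\{x_j\})$.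
   Context: $C_2$ denotes the 2-element chain and $\Pi_3$ the lattice of set partitions of a 3-element set (a 5-element poset of rank two). Let $\mathcal{A}=\{a_1,\dots,a_M\}$ and $\mathcal{X}=\{x_1,\dots,x_N\}$ be disjoint sets. A shuffle word is a word (possibly empty) with distinct letters from $\mathcal{A}\cup\mathcal{X}$ in which the letters of $\mathcal{A}$ appear in increasing order of subscripts and likewise those of $\mathcal{X}$. The poset of shuffles $W_{MN}$ consists of all shuffle words ordered by the reflexive-transitive closure of: $w\lessdot w'$ iff $w'$ is obtained from $w$ by deleting a letter of $\mathcal{A}$ or inserting a letter of $\mathcal{X}$; $\hat0=a_1\cdots a_M$, $\hat1=x_1\cdots x_N$. For a maximal chain $c=(\hat0=w^0\lessdot\cdots\lessdot w^{M+N}=\hat1)$ define $\Lambda(c)=(\Lambda_1(c),\dots,\Lambda_{M+N}(c))$ by: (x) if $w^{i+1}$ is obtained from $w^i$ by inserting $x_k$, then $\Lambda_{i+1}(c)=x_k$; (xa) if $w^i=u\,x_k\,a_m\,v$ and $w^{i+1}=u\,x_k\,v$ and this is the first deletion along $c$, starting from $\hat0$, of a letter located immediately after $x_k$, then $\Lambda_{i+1}(c)=x_k$; (a) if $w^{i+1}$ is obtained by deleting $a_j\in\mathcal{A}$ and this is not of type (xa), then $\Lambda_{i+1}(c)=a_j$. *)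

(* Defs.v *)
From mathcomp Require Import all_boot.
Set Implicit Arguments. Unset Strict Implicit. Unset Printing Implicit Defensive.

(* Letters: [inl m] is a_m (1 <= m <= M), [inr k] is x_k (1 <= k <= N). *)
Definition letter := (nat + nat)%type.
Definition word := seq letter.

Definition letter_ok (M N : nat) (l : letter) : bool :=
  match l with inl m => (0 < m <= M) | inr k => (0 < k <= N) end.

Definition getA (l : letter) : option nat := if l is inl m then Some m else None.
Definition getX (l : letter) : option nat := if l is inr k then Some k else None.

Definition shuffle (M N : nat) (w : word) : bool :=
  [&& uniq w, all (letter_ok M N) w,
      sorted ltn (pmap getA w) & sorted ltn (pmap getX w)].

Definition shcover (M N : nat) (w w' : word) : Prop :=
  shuffle M N w /\ shuffle M N w' /\
  ((exists (u v : word) (m : nat), w = u ++ inl m :: v /\ w' = u ++ v) \/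
   (exists (u v : word) (k : nat), w = u ++ v /\ w' = u ++ inr k :: v)).

Definition hat0 (M : nat) : word := [seq inl m | m <- iota 1 M].
Definition hat1 (N : nat) : word := [seq inr k | k <- iota 1 N].

Fixpoint cpath (R : word -> word -> Prop) (x : word) (s : seq word) : Prop :=
  match s with
  | [::] => True
  | y :: s' => R x y /\ cpath R y s'
  end.

Definition rank_two (M N : nat) (u v : word) : Prop :=
  (exists w, shcover M N u w /\ shcover M N w v) /\
  (forall p : seq word, cpath (shcover M N) u p -> last u p = v -> size p = 2).

Definition inserted (w w' : word) : letter :=
  head (inl 0) [seq x <- w' | x \notin w].
Definition deleted (w w' : word) : letter :=
  head (inl 0) [seq x <- w | x \notin w'].

Definition del_pred (w w' : word) : option letter :=
  if size w' < size w then
    let a := deleted w w' in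
    if index a w is p.+1 then Some (nth a w p) else None
  else None.

(* Lambda c i = Lambda_{i+1}(c), the label of the covering w^i <. w^{i+1}
   of the chain c = (w^0, ..., w^{M+N}). *)
Definition Lambda (c : seq word) (i : nat) : letter :=
  let w := nth [::] c i in
  let w' := nth [::] c i.+1 in
  if size w < size w' then inserted w w'
  else match del_pred w w' with
       | Some (inr k) =>
           if has (fun j => del_pred (nth [::] c j) (nth [::] c j.+1) == Some (inr k))
                  (iota 0 i)
           then deleted w w' else inr k
       | _ => deleted w w'
       end.

(* Main.v *)
Require Import Defs.
From mathcomp Require Import all_boot.
Set Implicit Arguments. Unset Strict Implicit. Unset Printing Implicit Defensive.

Lemma split_cat (T : Type) (s1 s2 t1 t2 : seq T) : s1 ++ s2 = t1 ++ t2 ->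
  exists r, (s1 = t1 ++ r /\ t2 = r ++ s2) \/ (t1 = s1 ++ r /\ s2 = r ++ t2).
Proof.
elim: s1 t1 => [|x s1 IH] [|y t1] /=.
- by move=> ->; exists [::]; left.
- by move=> ->; exists (y :: t1); right.
- by move=> <-; exists (x :: s1); left.
- case=> -> /IH [r [[-> ->]|[-> ->]]]; exists r; [left|right]; done.
Qed.

Lemma uniq_notin (T : eqType) (s1 s2 : seq T) c :
  uniq (s1 ++ c :: s2) -> c \notin s1.
Proof. by rewrite cat_uniq /= => /and3P[_ /norP[] ]. Qed.

Lemma uniq_split (T : eqType) (s1 s2 t1 t2 : seq T) c :
  uniq (s1 ++ c :: s2) -> s1 ++ c :: s2 = t1 ++ c :: t2 -> s1 = t1 /\ s2 = t2.
Proof.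
move=> U E.
have Hs := uniq_notin U.
have Ht : c \notin t1 by move: U; rewrite E => /uniq_notin.
have : index c (s1 ++ c :: s2) = index c (t1 ++ c :: t2) by rewrite E.
rewrite !index_cat (negbTE Hs) (negbTE Ht) /= eqxx !addn0 => Hz.
by move/eqP: E; rewrite eqseq_cat // => /andP[/eqP -> /eqP [->]].
Qed.

Lemma uniq_neq (T : eqType) (s1 s2 : seq T) x y :
  uniq (s1 ++ s2) -> x \in s1 -> y \in s2 -> x <> y.
Proof.
rewrite cat_uniq => /and3P[_ H _] xi yi E; subst.
by move/hasPn: H => /(_ _ yi); rewrite xi.
Qed.

Lemma sub_del (T : eqType) (p q : seq T) c : subseq (p ++ q) (p ++ c :: q).
Proof. by apply: cat_subseq => //; apply: subseq_cons. Qed.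

Lemma sub_pmap (f : letter -> option nat) (p q : word) c :
  subseq (pmap f (p ++ q)) (pmap f (p ++ c :: q)).
Proof.
rewrite !pmap_cat; apply: cat_subseq => //=.
by case: (f c) => //= n; apply: subseq_cons.
Qed.

Lemma shuffle_del M N p q c : shuffle M N (p ++ c :: q) -> shuffle M N (p ++ q).
Proof.
case/and4P=> U A SA SX; apply/and4P; split.
- exact: subseq_uniq (sub_del _ _ _) U.
- by apply/allP=> z /(mem_subseq (sub_del p q c)) zi; apply: (allP A).
- apply: subseq_sorted SA; [exact: ltn_trans| exact: sub_pmap].
- apply: subseq_sorted SX; [exact: ltn_trans| exact: sub_pmap].
Qed.

Lemma shuffle_merge M N s s1 s2 x : perm_eq s (x :: s1) -> x \notin s1 -> letter_ok M N x ->
  pmap getA s = pmap getA s1 -> pmap getX s = pmap getX s2 ->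
  shuffle M N s1 -> shuffle M N s2 -> shuffle M N s.
Proof.
move=> P xn xo EA EX /and4P[U1 A1 SA1 _] /and4P[_ _ _ SX2]; apply/and4P; split.
- by rewrite (perm_uniq P) /= xn U1.
- by rewrite (perm_all _ P) /= xo A1.
- by rewrite EA.
- by rewrite EX.
Qed.
Definition step_lab (used : nat -> bool) (w w' : word) : letter :=
  if size w < size w' then inserted w w'
  else match del_pred w w' with
       | Some (inr k) => if used k then deleted w w' else inr k
       | _ => deleted w w'
       end.

Lemma Lambda_step c i : Lambda c i =
  step_lab (fun k => has (fun j => del_pred (nth [::] c j) (nth [::] c j.+1) == Some (inr k)) (iota 0 i))
    (nth [::] c i) (nth [::] c i.+1).
Proof. by []. Qed.

Lemma step_lab_ext f g w w' : (forall k, f k = g k) -> step_lab f w w' = step_lab g w w'.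
Proof. by move=> E; rewrite /step_lab; case: del_pred => // [[]] // k; rewrite E. Qed.

Definition DL (used : nat -> bool) (P : option letter) (a : letter) : letter :=
  match P with Some (inr k) => if used k then a else inr k | _ => a end.

Lemma filter_notin (p s : word) : {subset p <= s} -> [seq y <- p | y \notin s] = [::].
Proof.
elim: p => //= y p IH H.
have -> : y \in s by apply: H; rewrite inE eqxx.
rewrite /= IH // => z zi; apply: H; by rewrite inE zi orbT.
Qed.

Lemma notin_del (p q : word) a : uniq (p ++ a :: q) -> a \notin p ++ q.
Proof.
move=> U; move: (U); rewrite -cat1s catA cat_uniq => /and3P[_ H _]; apply/negP; rewrite mem_cat => /orP[xp|xq].
  by move: (uniq_notin U); rewrite xp.
by move/hasP: H; apply; exists a => //; rewrite mem_cat mem_seq1 eqxx orbT.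
Qed.

Lemma deleted_step p q a : uniq (p ++ a :: q) -> deleted (p ++ a :: q) (p ++ q) = a.
Proof.
move=> U; rewrite /deleted filter_cat filter_notin; last by move=> z zi; rewrite mem_cat zi.
by rewrite /= (notin_del U).
Qed.

Lemma ins_step used p q x : uniq (p ++ x :: q) -> step_lab used (p ++ q) (p ++ x :: q) = x.
Proof.
move=> U; rewrite /step_lab !size_cat /= addnS ltnSn /inserted filter_cat /=.
rewrite filter_notin; last by move=> z zi; rewrite mem_cat zi.
by rewrite (notin_del U).
Qed.

Lemma del_pred_step p q a : uniq (p ++ a :: q) -> del_pred (p ++ a :: q) (p ++ q) = ohead (rev p).
Proof.
move=> U; rewrite /del_pred !size_cat /= addnS ltnSn (deleted_step U).
rewrite index_cat (negbTE (uniq_notin U)) /= eqxx addn0.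
case/lastP: p U => //= p y U.
rewrite size_rcons nth_cat size_rcons ltnSn nth_rcons ltnn eqxx.
by rewrite rev_rcons.
Qed.

Lemma del_step used p q a : uniq (p ++ a :: q) ->
  step_lab used (p ++ a :: q) (p ++ q) = DL used (ohead (rev p)) a.
Proof.
move=> U; have E := del_pred_step U; rewrite /step_lab E !size_cat /= addnS ltnNge leqnSn /=.
rewrite (deleted_step U).
by case: (ohead (rev p)) => // [[]].
Qed.

Lemma del_pred_ins p q x : del_pred (p ++ q) (p ++ x :: q) = None.
Proof. by rewrite /del_pred !size_cat /= addnS ltnNge leqnSn. Qed.
Definition usedf (x0 : word) (lo : seq word) (k : nat) : bool :=
  has (fun j => del_pred (nth [::] (x0 :: lo) j) (nth [::] (x0 :: lo) j.+1) == Some (inr k))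
      (iota 0 (size lo)).

Lemma nth_pre (x0 : word) lo rest j : j <= size lo ->
  nth [::] (x0 :: lo ++ rest) j = nth [::] (x0 :: lo) j.
Proof. by move=> H; rewrite -cat_cons nth_cat /= ltnS H. Qed.

Lemma nth_lastw (x0 : word) lo rest :
  nth [::] (x0 :: lo ++ rest) (size lo) = last x0 lo.
Proof. by rewrite nth_pre // -[size lo]/((size (x0 :: lo)).-1) nth_last. Qed.

Lemma lab_eq (x0 : word) lo w v hi :
  Lambda (x0 :: lo ++ w :: v :: hi) (size lo) = step_lab (usedf x0 lo) (last x0 lo) w /\
  Lambda (x0 :: lo ++ w :: v :: hi) (size lo).+1 =
    step_lab (fun k => usedf x0 lo k || (del_pred (last x0 lo) w == Some (inr k))) w v.
Proof.
have E1 : nth [::] (x0 :: lo ++ w :: v :: hi) (size lo).+1 = w.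
  by rewrite -cat_cons nth_cat /= ltnn subnn.
have E2 : nth [::] (x0 :: lo ++ w :: v :: hi) (size lo).+2 = v.
  by rewrite -cat_cons nth_cat /= ltnNge leqnSn /= subSnn.
have EU : forall k, has (fun j => del_pred (nth [::] (x0 :: lo ++ w :: v :: hi) j)
      (nth [::] (x0 :: lo ++ w :: v :: hi) j.+1) == Some (inr k)) (iota 0 (size lo)) = usedf x0 lo k.
  move=> k; apply: eq_in_has => j; rewrite mem_iota add0n => /andP[_ jl].
  by rewrite !nth_pre // ltnW.
split; rewrite Lambda_step.
  rewrite nth_lastw (step_lab_ext _ _ EU); congr step_lab; exact: E1.
apply: etrans; first (apply: step_lab_ext => k;
  by rewrite -addn1 iotaD has_cat EU /= add0n nth_lastw nth_cat ltnn subnn /= orbF).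
by congr step_lab; [exact: E1 | exact: E2].
Qed.
Lemma cover_mono M N x y k : shcover M N x y -> inr k \in x -> inr k \in y.
Proof.
case=> _ [_ [[s1 [s2 [m [-> ->]]]]|[s1 [s2 [m [-> ->]]]]]];
  rewrite !mem_cat ?inE /=.
- by [].
- by case/orP=> ->; rewrite ?orbT.
Qed.

Lemma mono_last M N x0 lo k : cpath (shcover M N) x0 lo -> inr k \in x0 -> inr k \in last x0 lo.
Proof.
elim: lo x0 => //= y lo IH x0 [C P] H; apply: IH => //; exact: cover_mono C H.
Qed.

Lemma mono_nth M N x0 lo k j : cpath (shcover M N) x0 lo -> j <= size lo ->
  inr k \in nth [::] (x0 :: lo) j -> inr k \in last x0 lo.
Proof.
move=> C; elim: lo x0 j C => [|y lo IH] x0 [|j] C //=.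
- by move=> _; apply: (mono_last C).
- by case: C => _ C; rewrite ltnS; apply: IH.
Qed.

Lemma del_pred_mem s s' y : del_pred s s' = Some y -> y \in s.
Proof.
rewrite /del_pred; case: ifP => // _.
case E: index => [|p] //= [<-]; apply: mem_nth.
by rewrite -ltnS -E; apply: index_size.
Qed.

Lemma used_false M N x0 lo k : cpath (shcover M N) x0 lo -> inr k \notin last x0 lo ->
  usedf x0 lo k = false.
Proof.
move=> C H; apply/negbTE/hasPn => j; rewrite mem_iota add0n => /andP[_ jl].
apply/negP => /eqP /del_pred_mem Hm.
by move: H; rewrite (mono_nth C (ltnW jl) Hm).
Qed.
From mathcomp Require Import zify.

Ltac szlia E1 E2 E3 E4 := move: (f_equal size E1) (f_equal size E2) (f_equal size E3) (f_equal size E4);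
  rewrite ?size_cat /= ?size_cat /= ?size_cat /=;
  let A := fresh in let B := fresh in let C := fresh in let D := fresh in
  move=> A B C D; clear -A B C D; lia.

Ltac s1lia := rewrite ?size_cat /= ?size_cat /= ?size_cat /=;
  let A := fresh in move=> A; clear -A; lia.

Definition Goal M N (u v : word) (lab : word -> letter * letter) : Prop :=
  (exists w1 w2 : word, w1 <> w2 /\
     (forall w, (shcover M N u w /\ shcover M N w v) <-> (w = w1 \/ w = w2)) /\
     exists l1 l2 : letter, letter_ok M N l1 /\ letter_ok M N l2 /\ l1 <> l2 /\
       lab w1 = (l1, l2) /\ lab w2 = (l2, l1))
  \/
  (exists w1 w2 w3 : word, w1 <> w2 /\ w1 <> w3 /\ w2 <> w3 /\
     (forall w, (shcover M N u w /\ shcover M N w v) <-> (w = w1 \/ w = w2 \/ w = w3)) /\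
     exists (j : nat) (l : letter), (0 < j <= N) /\ letter_ok M N l /\ l <> inr j /\
       lab w1 = (inr j, l) /\ lab w2 = (l, inr j) /\ lab w3 = (inr j, inr j)).

Lemma Goal_ext M N u v f g : (forall w, f w = g w) -> Goal M N u v g -> Goal M N u v f.
Proof.
move=> E [[w1 [w2 [H1 [H2 [l1 [l2 [H3 [H4 [H5 [H6 H7]]]]]]]]]]|
         [w1 [w2 [w3 [H1 [H2 [H3 [H4 [j [l [H5 [H6 [H7 [H8 [H9 H10]]]]]]]]]]]]]]].
- by left; exists w1, w2; split => //; split => //; exists l1, l2; rewrite !E.
- by right; exists w1, w2, w3; do 4 (split => //); exists j, l; rewrite !E.
Qed.

Definition labf (used : nat -> bool) (u v w : word) : letter * letter :=
  (step_lab used u w, step_lab (fun k => used k || (del_pred u w == Some (inr k))) w v).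

Lemma ohead_rev_mem (p : word) z : ohead (rev p) = Some z -> z \in p.
Proof. by case/lastP: p => //= p y; rewrite rev_rcons /= => [[->]]; rewrite mem_rcons inE eqxx. Qed.

Lemma DL_cases f P a : DL f P a = a \/ P = Some (DL f P a).
Proof. by case: P => [[m|k]|] /=; auto; case: (f k); auto. Qed.

Lemma DL_in f P a (s : word) : a \in s -> (forall z, P = Some z -> z \in s) -> DL f P a \in s.
Proof. by move=> H1 H2; case: (DL_cases f P a) => [->|/H2]. Qed.

Lemma DL_irrel f g P a : (forall k, P = Some (inr k) -> f k = g k) -> DL f P a = DL g P a.
Proof. by case: P => [[m|k]|] //= H; rewrite H. Qed.

Lemma DL_used f P b : DL (fun k => f k || (P == Some (inr k))) P b = b.
Proof. by case: P => [[m|k]|] //=; rewrite eqxx orbT. Qed.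

Lemma shuffle_ok M N s l : shuffle M N s -> l \in s -> letter_ok M N l.
Proof. by case/and4P=> _ A _ _ /(allP A). Qed.

Lemma shuffle_uniq M N s : shuffle M N s -> uniq s.
Proof. by case/and4P. Qed.

Lemma mk_del M N p q m : shuffle M N (p ++ inl m :: q) -> shcover M N (p ++ inl m :: q) (p ++ q).
Proof.
move=> S; split => //; split; first exact: shuffle_del S.
by left; exists p, q, m.
Qed.

Lemma mk_ins M N p q k : shuffle M N (p ++ q) -> shuffle M N (p ++ inr k :: q) ->
  shcover M N (p ++ q) (p ++ inr k :: q).
Proof. by move=> S1 S2; split => //; split => //; right; exists p, q, k. Qed.
Lemma sub_in (x : letter) (p q : word) c : x \in p ++ q -> x \in p ++ c :: q.
Proof. by rewrite !mem_cat inE; case/orP => ->; rewrite ?orbT. Qed.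

Lemma ohead_rev_cat (p s : word) x : ohead (rev (p ++ x :: s)) = ohead (rev (x :: s)).
Proof. by rewrite rev_cat rev_cons; case: (rev s). Qed.

Lemma conf_DD M N used p r q m m' :
  shuffle M N (p ++ inl m :: r ++ inl m' :: q) ->
  Goal M N (p ++ inl m :: r ++ inl m' :: q) (p ++ r ++ q)
    (labf used (p ++ inl m :: r ++ inl m' :: q) (p ++ r ++ q)).
Proof.
move=> S; have U := shuffle_uniq S.
have U2 : uniq ((p ++ inl m :: r) ++ inl m' :: q) by rewrite -catA.
left; exists (p ++ r ++ inl m' :: q), (p ++ inl m :: r ++ q).
split.
  move=> E; move: (notin_del U); rewrite E.
  by rewrite mem_cat inE eqxx orbT.
split.
  move=> w; split.
    case=> [[_ [_ [[s1 [s2 [c [E1 E2]]]]|[s1 [s2 [c [E1 E2]]]]]]] [_ [_ [[t1 [t2 [d [E3 E4]]]]|[t1 [t2 [d [E3 E4]]]]]]]];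
      try by szlia E1 E2 E3 E4.
    have Hu : inl c \in p ++ inl m :: r ++ inl m' :: q by rewrite E1 mem_cat inE eqxx orbT.
    have Hw : inl c \notin w by rewrite E2; apply: notin_del; rewrite -E1.
    have Hv : inl c \notin p ++ r ++ q.
      by apply/negP; rewrite E4 => /(sub_in (inl d)); rewrite -E3 (negbTE Hw).
    have : (inl c == inl m :> letter) || (inl c == inl m' :> letter).
      move: Hu Hv; rewrite !mem_cat !inE !mem_cat !inE.
      by case: (inl c \in p); case: (inl c \in r); case: (inl c \in q);
         case: (inl c == inl m :> letter); case: (inl c == inl m' :> letter).
    case/orP => /eqP Ec; rewrite Ec in E1.
      by left; rewrite E2; case: (uniq_split U E1) => <- <-.
    have E1' : (p ++ inl m :: r) ++ inl m' :: q = s1 ++ inl m' :: s2 by rewrite -catA.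
    by right; rewrite E2; case: (uniq_split U2 E1') => <- <-; rewrite -catA.
  case=> ->; split.
  - exact: mk_del S.
  - by rewrite !catA; apply: mk_del; rewrite -catA; apply: shuffle_del S.
  - have -> : p ++ inl m :: r ++ inl m' :: q = (p ++ inl m :: r) ++ inl m' :: q by rewrite -catA.
    have -> : p ++ inl m :: r ++ q = (p ++ inl m :: r) ++ q by rewrite -catA.
    by apply: mk_del; rewrite -catA.
  - apply: mk_del; move: (@shuffle_del M N (p ++ inl m :: r) q (inl m')).
    by rewrite -!catA /=; apply.
have Uw1 : uniq ((p ++ r) ++ inl m' :: q) by rewrite -catA; apply: shuffle_uniq (shuffle_del S).
have Uw2 : uniq (p ++ inl m :: r ++ q).
  by apply: shuffle_uniq; move: (@shuffle_del M N (p ++ inl m :: r) q (inl m')); rewrite -!catA /=; apply.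
set P := ohead (rev p); set Q := ohead (rev (inl m :: r)).
have D1 : forall f, step_lab f (p ++ inl m :: r ++ inl m' :: q) (p ++ r ++ inl m' :: q) = DL f P (inl m).
  by move=> f; apply: del_step.
have D2 : forall f, step_lab f (p ++ r ++ inl m' :: q) (p ++ r ++ q) = DL f (ohead (rev (p ++ r))) (inl m').
  by move=> f; have := del_step f Uw1; rewrite -!catA.
have D3 : forall f, step_lab f (p ++ inl m :: r ++ inl m' :: q) (p ++ inl m :: r ++ q) = DL f Q (inl m').
  by move=> f; have := del_step f U2; rewrite -!catA /= ohead_rev_cat.
have D4 : forall f, step_lab f (p ++ inl m :: r ++ q) (p ++ r ++ q) = DL f P (inl m).
  by move=> f; apply: del_step.
have P1 : del_pred (p ++ inl m :: r ++ inl m' :: q) (p ++ r ++ inl m' :: q) = P by apply: del_pred_step.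
have P2 : del_pred (p ++ inl m :: r ++ inl m' :: q) (p ++ inl m :: r ++ q) = Q.
  by have := del_pred_step U2; rewrite -!catA /= ohead_rev_cat.
rewrite /labf D1 D2 D3 D4 P1 P2.
have PQ : forall k, P = Some (inr k) -> Q = Some (inr k) -> False.
  move=> k /ohead_rev_mem H1 /ohead_rev_mem H2.
  by apply: (uniq_neq U H1 (y := inr k)) => //; rewrite -cat_cons mem_cat H2.
have Pin : forall z, P = Some z -> z \in p ++ inl m :: r ++ inl m' :: q.
  by move=> z /ohead_rev_mem H; rewrite mem_cat H.
have Qin : forall z, Q = Some z -> z \in p ++ inl m :: r ++ inl m' :: q.
  by move=> z /ohead_rev_mem H; rewrite mem_cat -cat_cons mem_cat H orbT.
exists (DL used P (inl m)), (DL used Q (inl m')).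
split; first by apply: (shuffle_ok S); apply: DL_in => //; rewrite mem_cat inE eqxx orbT.
split; first by apply: (shuffle_ok S); apply: DL_in => //; rewrite !mem_cat !inE !mem_cat !inE eqxx !orbT.
have l1in : DL used P (inl m) \in p ++ [:: inl m].
  by apply: DL_in; [rewrite mem_cat inE eqxx orbT | move=> z /ohead_rev_mem H; rewrite mem_cat H].
split.
  destruct r as [|y r'].
    by apply: (uniq_neq (s1 := p ++ [:: inl m]) (s2 := inl m' :: q)); rewrite ?mem_head // -catA.
  have l2in : DL used Q (inl m') \in (y :: r') ++ inl m' :: q.
    apply: DL_in; first by rewrite mem_cat mem_head orbT.
    move=> z; rewrite /Q (ohead_rev_cat [:: inl m]) => /ohead_rev_mem H; by rewrite mem_cat H.
  by apply: (uniq_neq _ l1in l2in); rewrite -catA.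
split; last first.
  congr pair; apply: DL_irrel => k Hk; case E: (Q == _); last by rewrite orbF.
  by case: (PQ k Hk (eqP E)).
congr pair.
destruct r as [|y r'].
  by rewrite cats0 DL_used.
rewrite ohead_rev_cat /Q (ohead_rev_cat [:: inl m]).
apply: DL_irrel => k Hk; case E: (P == _); last by rewrite orbF.
by case: (PQ k (eqP E)); rewrite /Q (ohead_rev_cat [:: inl m]).
Qed.
Lemma conf_II M N used p r q j j' :
  shuffle M N (p ++ inr j :: r ++ inr j' :: q) ->
  Goal M N (p ++ r ++ q) (p ++ inr j :: r ++ inr j' :: q)
    (labf used (p ++ r ++ q) (p ++ inr j :: r ++ inr j' :: q)).
Proof.
move=> S; have U := shuffle_uniq S.
have U2 : uniq ((p ++ inr j :: r) ++ inr j' :: q) by rewrite -catA.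
have S2 : shuffle M N ((p ++ inr j :: r) ++ inr j' :: q) by rewrite -catA.
have Sw1 : shuffle M N (p ++ r ++ inr j' :: q) := shuffle_del S.
have Sw2 : shuffle M N (p ++ inr j :: r ++ q).
  by move: (shuffle_del S2); rewrite -!catA.
have Su : shuffle M N (p ++ r ++ q).
  by move: (shuffle_del Sw2).
left; exists (p ++ r ++ inr j' :: q), (p ++ inr j :: r ++ q).
split.
  move=> E; move: (notin_del U); rewrite E.
  by rewrite mem_cat inE eqxx orbT.
split.
  move=> w; split.
    case=> [[_ [_ [[s1 [s2 [c [E1 E2]]]]|[s1 [s2 [c [E1 E2]]]]]]] [_ [_ [[t1 [t2 [d [E3 E4]]]]|[t1 [t2 [d [E3 E4]]]]]]]];
      try by szlia E1 E2 E3 E4.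
    have Hv : inr d \in p ++ inr j :: r ++ inr j' :: q by rewrite E4 mem_cat inE eqxx orbT.
    have Hw : inr d \notin w by rewrite E3; apply: notin_del; rewrite -E4.
    have Hu : inr d \notin p ++ r ++ q.
      by apply/negP; rewrite E1 => /(sub_in (inr c)); rewrite -E2 (negbTE Hw).
    have : (inr d == inr j :> letter) || (inr d == inr j' :> letter).
      move: Hu Hv; rewrite !mem_cat !inE !mem_cat !inE.
      by case: (inr d \in p); case: (inr d \in r); case: (inr d \in q);
         case: (inr d == inr j :> letter); case: (inr d == inr j' :> letter).
    case/orP => /eqP Ec; rewrite Ec in E4.
      by left; rewrite E3; case: (uniq_split U E4) => <- <-.
    have E4' : (p ++ inr j :: r) ++ inr j' :: q = t1 ++ inr j' :: t2 by rewrite -catA.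
    by right; rewrite E3; case: (uniq_split U2 E4') => <- <-; rewrite -catA.
  case=> ->; split.
  - by rewrite !catA; apply: mk_ins; rewrite -catA.
  - exact: mk_ins.
  - exact: mk_ins.
  - have -> : p ++ inr j :: r ++ inr j' :: q = (p ++ inr j :: r) ++ inr j' :: q by rewrite -catA.
    have -> : p ++ inr j :: r ++ q = (p ++ inr j :: r) ++ q by rewrite -catA.
    by apply: mk_ins; rewrite -catA.
have Uw1 : uniq ((p ++ r) ++ inr j' :: q) by rewrite -catA; apply: shuffle_uniq Sw1.
exists (inr j'), (inr j).
split; first by apply: (shuffle_ok S); rewrite !mem_cat !inE !mem_cat !inE eqxx !orbT.
split; first by apply: (shuffle_ok S); rewrite !mem_cat !inE eqxx !orbT.
split.
  move=> E; move: (notin_del U); rewrite -E.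
  by rewrite !mem_cat !inE eqxx !orbT.
rewrite /labf; split.
  congr pair.
    by have := ins_step used Uw1; rewrite -!catA.
  exact: ins_step.
congr pair.
  by apply: ins_step; apply: shuffle_uniq Sw2.
by have := ins_step (fun k => used k || (del_pred (p ++ r ++ q) (p ++ inr j :: r ++ q) == Some (inr k))) U2; rewrite -!catA.
Qed.
Lemma catl_inj (T : Type) (p a b : seq T) : p ++ a = p ++ b -> a = b.
Proof. by elim: p => //= x p IH [] /IH. Qed.

Lemma catr_inj (T : eqType) (a b q : seq T) : a ++ q = b ++ q -> a = b.
Proof.
move=> E; have Hs : size a = size b.
  by move: (f_equal size E); rewrite !size_cat => /eqP; rewrite eqn_add2r => /eqP.
by move/eqP: E; rewrite eqseq_cat // => /andP[/eqP].
Qed.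

Lemma wsplit (s1 s2 t1 t2 : word) x a : x <> a -> s1 ++ x :: s2 = t1 ++ a :: t2 ->
  (exists r1, s1 = t1 ++ a :: r1 /\ t2 = r1 ++ x :: s2) \/
  (exists r1, t1 = s1 ++ x :: r1 /\ s2 = r1 ++ a :: t2).
Proof.
move=> xa /split_cat [[|z r0] [[E1 E2]|[E1 E2]]].
- by case: E2 => E; case: xa.
- by case: E2 => E; case: xa.
- by case: E2 => -> ->; left; exists r0.
- by case: E2 => -> ->; right; exists r0.
Qed.

Lemma mixed_letters (s1 s2 t1 t2 w : word) c d :
  uniq w -> w = s1 ++ inr c :: s2 -> w = t1 ++ inl d :: t2 ->
  [/\ inr c \in t1 ++ t2, inr c \notin s1 ++ s2, inl d \in s1 ++ s2 & inl d \notin t1 ++ t2].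
Proof.
move=> U E1 E2; split.
- have : inr c \in w by rewrite E1 mem_cat mem_head orbT.
  by rewrite E2 !mem_cat inE /=.
- by apply: notin_del; rewrite -E1.
- have : inl d \in w by rewrite E2 mem_cat mem_head orbT.
  by rewrite E1 !mem_cat inE /=.
- by apply: notin_del; rewrite -E2.
Qed.
Ltac bb := repeat (match goal with |- context[(?x \in ?s)] => case: (x \in s) | |- context[(?x == ?y)] => case: (x == y) end); try done.


Lemma MR_char M N p r q m j w :
  shuffle M N (p ++ inl m :: r ++ q) -> shuffle M N (p ++ r ++ inr j :: q) ->
  shcover M N (p ++ inl m :: r ++ q) w -> shcover M N w (p ++ r ++ inr j :: q) ->
  w = p ++ r ++ q \/ w = p ++ inl m :: r ++ inr j :: q \/ (r = [::] /\ w = p ++ inr j :: inl m :: q).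
Proof.
move=> Su Sv [_ [Sw C1]] [_ [_ C2]].
have Uu := shuffle_uniq Su; have Uv := shuffle_uniq Sv; have Uw := shuffle_uniq Sw.
case: C1 => [[s1 [s2 [c [E1 E2]]]]|[s1 [s2 [c [E1 E2]]]]];
case: C2 => [[t1 [t2 [d [E3 E4]]]]|[t1 [t2 [d [E3 E4]]]]]; try by szlia E1 E2 E3 E4.
-
  have Hu : inl c \in p ++ inl m :: r ++ q by rewrite E1 mem_cat mem_head orbT.
  have Hw : inl c \notin w by rewrite E2; apply: notin_del; rewrite -E1.
  have Hv : inl c \notin p ++ r ++ inr j :: q.
    apply/negP; rewrite E4 !mem_cat inE /= => H.
    by move: Hw; rewrite E3 mem_cat H.
  have /eqP Ec : (inl c == inl m :> letter).
    move: Hu Hv; rewrite !mem_cat !inE ?mem_cat ?inE /=.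
    by bb.
  rewrite Ec in E1; left; rewrite E2; by case: (uniq_split Uu E1) => <- <-.
-
  case: (mixed_letters Uw E2 E3); rewrite -E1 -E4 => H1 H2 H3 H4.
  have /eqP Ec : (inr c == inr j :> letter).
    move: H1 H2; rewrite !mem_cat !inE ?mem_cat ?inE /=.
    by bb.
  have /eqP Ed : (inl d == inl m :> letter).
    move: H3 H4; rewrite !mem_cat !inE ?mem_cat ?inE /=.
    by bb.
  rewrite Ec in E2; rewrite Ed in E3.
  have Uv' : uniq ((p ++ r) ++ inr j :: q) by rewrite -catA.
  case: (wsplit (x := inr j) (a := inl m) _ (etrans (esym E2) E3)) => // [[r1 [e1 e2]]|[r1 [e1 e2]]].
  + subst s1 t2.
    have E1' : p ++ inl m :: r ++ q = t1 ++ inl m :: r1 ++ s2 by rewrite E1 -catA.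
    case: (uniq_split Uu E1') => e3 e4; subst t1.
    have E4' : (p ++ r) ++ inr j :: q = (p ++ r1) ++ inr j :: s2 by rewrite -!catA E4.
    case: (uniq_split Uv' E4') => /catl_inj e5 e6; subst r1 s2.
    by right; left; rewrite E2 -catA.
  + subst t1 s2.
    have E1' : p ++ inl m :: r ++ q = (s1 ++ r1) ++ inl m :: t2 by rewrite E1 -catA.
    case: (uniq_split Uu E1') => e3 e4.
    have E4' : (p ++ r) ++ inr j :: q = s1 ++ inr j :: r1 ++ t2 by rewrite -catA E4 -catA.
    case: (uniq_split Uv' E4') => e5 e6.
    have [r0 r10] : r = [::] /\ r1 = [::].
      move: (f_equal size e3) (f_equal size e5); rewrite !size_cat => A B.
      by split; apply/eqP; rewrite -size_eq0; apply/eqP; clear -A B; lia.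
    subst r r1; rewrite cats0 in e5; subst s1 t2.
    by right; right; split => //; rewrite E2.
Qed.
Lemma ML_char M N p r q m j w : r <> [::] ->
  shuffle M N (p ++ r ++ inl m :: q) -> shuffle M N (p ++ inr j :: r ++ q) ->
  shcover M N (p ++ r ++ inl m :: q) w -> shcover M N w (p ++ inr j :: r ++ q) ->
  w = p ++ r ++ q \/ w = p ++ inr j :: r ++ inl m :: q.
Proof.
move=> rn Su Sv [_ [Sw C1]] [_ [_ C2]].
have Uu := shuffle_uniq Su; have Uv := shuffle_uniq Sv; have Uw := shuffle_uniq Sw.
have Uu' : uniq ((p ++ r) ++ inl m :: q) by rewrite -catA.
case: C1 => [[s1 [s2 [c [E1 E2]]]]|[s1 [s2 [c [E1 E2]]]]];
case: C2 => [[t1 [t2 [d [E3 E4]]]]|[t1 [t2 [d [E3 E4]]]]]; try by szlia E1 E2 E3 E4.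
-
  have Hu : inl c \in p ++ r ++ inl m :: q by rewrite E1 mem_cat mem_head orbT.
  have Hw : inl c \notin w by rewrite E2; apply: notin_del; rewrite -E1.
  have Hv : inl c \notin p ++ inr j :: r ++ q.
    apply/negP; rewrite E4 !mem_cat inE /= => H.
    by move: Hw; rewrite E3 mem_cat H.
  have /eqP Ec : (inl c == inl m :> letter).
    move: Hu Hv; rewrite !mem_cat !inE ?mem_cat ?inE /=.
    by bb.
  rewrite Ec in E1; left; rewrite E2.
  have E1' : (p ++ r) ++ inl m :: q = s1 ++ inl m :: s2 by rewrite -catA.
  by case: (uniq_split Uu' E1') => <- <-; rewrite catA.
-
  case: (mixed_letters Uw E2 E3); rewrite -E1 -E4 => H1 H2 H3 H4.
  have /eqP Ec : (inr c == inr j :> letter).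
    move: H1 H2; rewrite !mem_cat !inE ?mem_cat ?inE /=.
    by bb.
  have /eqP Ed : (inl d == inl m :> letter).
    move: H3 H4; rewrite !mem_cat !inE ?mem_cat ?inE /=.
    by bb.
  rewrite Ec in E2; rewrite Ed in E3.
  case: (wsplit (x := inr j) (a := inl m) _ (etrans (esym E2) E3)) => // [[r1 [e1 e2]]|[r1 [e1 e2]]].
  + subst s1 t2.
    have E1' : (p ++ r) ++ inl m :: q = t1 ++ inl m :: r1 ++ s2 by rewrite -catA E1 -catA.
    case: (uniq_split Uu' E1') => e3 e4.
    have E4' : p ++ inr j :: r ++ q = (t1 ++ r1) ++ inr j :: s2 by rewrite E4 -catA.
    case: (uniq_split Uv E4') => e5 e6.
    exfalso; apply: rn; apply/eqP; rewrite -size_eq0; apply/eqP.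
    move: (f_equal size e3) (f_equal size e5); rewrite !size_cat => A B; clear -A B; lia.
  + subst t1 s2.
    have E1' : (p ++ r) ++ inl m :: q = (s1 ++ r1) ++ inl m :: t2 by rewrite -catA E1 -catA.
    case: (uniq_split Uu' E1') => e3 e4; subst t2.
    have E4' : p ++ inr j :: r ++ q = s1 ++ inr j :: r1 ++ q by rewrite E4 -catA.
    case: (uniq_split Uv E4') => e5 e6; subst s1.
    move/catl_inj: e3 => e3; subst r1.
    by right; rewrite E2.
Qed.
Lemma conf_MR M N used p r q m j :
  shuffle M N (p ++ inl m :: r ++ q) -> shuffle M N (p ++ r ++ inr j :: q) ->
  (forall k, inr k \notin p ++ inl m :: r ++ q -> used k = false) ->
  Goal M N (p ++ inl m :: r ++ q) (p ++ r ++ inr j :: q)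
    (labf used (p ++ inl m :: r ++ q) (p ++ r ++ inr j :: q)).
Proof.
move=> Su Sv Hused.
have Uu := shuffle_uniq Su; have Uv := shuffle_uniq Sv.
have Sv' : shuffle M N ((p ++ r) ++ inr j :: q) by rewrite -catA.
have xn : inr j \notin p ++ inl m :: r ++ q.
  move: (notin_del (shuffle_uniq Sv')); rewrite -catA; apply: contra.
  by rewrite !mem_cat !inE ?mem_cat ?inE /=; bb.
have xok : letter_ok M N (inr j) by apply: (shuffle_ok Sv); rewrite !mem_cat mem_head !orbT.
have Sdel : shuffle M N (p ++ r ++ q) := shuffle_del Su.
have Sins : shuffle M N (p ++ inl m :: r ++ inr j :: q).
  apply: (shuffle_merge (x := inr j) (s1 := p ++ inl m :: r ++ q) (s2 := p ++ r ++ inr j :: q)) => //.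
  - have -> : p ++ inl m :: r ++ inr j :: q = (p ++ inl m :: r) ++ [:: inr j] ++ q by rewrite -catA.
    by rewrite perm_catCA /= -catA.
  - by rewrite !pmap_cat /= !pmap_cat.
  - by rewrite !pmap_cat /= !pmap_cat.
have Uins := shuffle_uniq Sins.
have Cud : shcover M N (p ++ inl m :: r ++ q) (p ++ r ++ q) by apply: mk_del.
have Cdv : shcover M N (p ++ r ++ q) (p ++ r ++ inr j :: q).
  by rewrite !catA; apply: mk_ins; rewrite -catA.
have Cui : shcover M N (p ++ inl m :: r ++ q) (p ++ inl m :: r ++ inr j :: q).
  have -> : p ++ inl m :: r ++ q = (p ++ inl m :: r) ++ q by rewrite -catA.
  have -> : p ++ inl m :: r ++ inr j :: q = (p ++ inl m :: r) ++ inr j :: q by rewrite -catA.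
  by apply: mk_ins; rewrite -catA.
have Civ : shcover M N (p ++ inl m :: r ++ inr j :: q) (p ++ r ++ inr j :: q) by apply: mk_del.
set l := DL used (ohead (rev p)) (inl m).
have lok : letter_ok M N l.
  apply: (shuffle_ok Su); apply: DL_in; first by rewrite mem_cat mem_head orbT.
  by move=> z /ohead_rev_mem H; rewrite mem_cat H.
have lx : l <> inr j.
  move=> E; move: xn; rewrite -E; apply/negP/negPn; apply: DL_in; first by rewrite mem_cat mem_head orbT.
  by move=> z /ohead_rev_mem H; rewrite mem_cat H.
have Ldel : labf used (p ++ inl m :: r ++ q) (p ++ r ++ inr j :: q) (p ++ r ++ q) = (l, inr j).
  rewrite /labf (del_step _ Uu); congr pair.
  by have := ins_step (fun k => used k || (del_pred (p ++ inl m :: r ++ q) (p ++ r ++ q) == Some (inr k)))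
     (shuffle_uniq Sv'); rewrite -!catA.
have Lins : labf used (p ++ inl m :: r ++ q) (p ++ r ++ inr j :: q) (p ++ inl m :: r ++ inr j :: q) = (inr j, l).
  have Dp : del_pred (p ++ inl m :: r ++ q) (p ++ inl m :: r ++ inr j :: q) = None.
    by have := del_pred_ins (p ++ inl m :: r) q (inr j); rewrite -!catA.
  rewrite /labf Dp (del_step _ Uins); congr pair.
    have Uins' : uniq ((p ++ inl m :: r) ++ inr j :: q) by rewrite -catA.
    by have := ins_step used Uins'; rewrite -!catA.
  by apply: DL_irrel => k _; rewrite orbF.
destruct r as [|y r'].
-
  right; exists (p ++ inl m :: inr j :: q), (p ++ q), (p ++ inr j :: inl m :: q).
  have Sw3 : shuffle M N (p ++ inr j :: inl m :: q).
    apply: (shuffle_merge (x := inr j) (s1 := p ++ inl m :: q) (s2 := p ++ inr j :: q)) => //.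
    - by rewrite -cat1s perm_catCA.
    - by rewrite !pmap_cat /=.
    - by rewrite !pmap_cat /=.
  split; first by move/(f_equal size); s1lia.
  split; first by move/catl_inj => [].
  split; first by move/(f_equal size); s1lia.
  split.
    move=> w; split.
      case=> C1 C2; case: (MR_char Su Sv C1 C2) => [->|[->|[_ ->]]]; auto.
    case=> [->|[->|->]]; [split => //|split => //|split].
    + exact: mk_ins.
    + have -> : p ++ inr j :: inl m :: q = (p ++ [:: inr j]) ++ inl m :: q by rewrite -catA.
      have -> : p ++ [::] ++ inr j :: q = (p ++ [:: inr j]) ++ q by rewrite -catA.
      by apply: mk_del; rewrite -catA.
  exists j, l; split; first by [].
  split => //; split => //; split => //; split => //.
  have Uw3 := shuffle_uniq Sw3.
  rewrite /labf (ins_step _ Uw3) (del_pred_ins p (inl m :: q) (inr j)).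
  have Uw3' : uniq ((p ++ [:: inr j]) ++ inl m :: q) by rewrite -catA.
  have := del_step (fun k => used k || (None == Some (inr k))) Uw3'.
  rewrite -!catA /= => ->; rewrite rev_cat /= Hused //.
-
  left; exists (p ++ y :: r' ++ q), (p ++ inl m :: y :: r' ++ inr j :: q).
  split; first by move/(f_equal size); s1lia.
  split.
    move=> w; split.
      by case=> C1 C2; case: (MR_char Su Sv C1 C2) => [->|[->|[]]]; auto.
    by case=> ->.
  by exists l, (inr j); do 3 (split => //).
Qed.
Lemma pmap_del_none (f : letter -> option nat) (p q : word) c : f c = None ->
  pmap f (p ++ c :: q) = pmap f (p ++ q).
Proof. by move=> H; rewrite !pmap_cat /= H. Qed.

Lemma conf_ML M N used p y r' q m j :
  shuffle M N (p ++ (y :: r') ++ inl m :: q) -> shuffle M N (p ++ inr j :: (y :: r') ++ q) ->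
  Goal M N (p ++ (y :: r') ++ inl m :: q) (p ++ inr j :: (y :: r') ++ q)
    (labf used (p ++ (y :: r') ++ inl m :: q) (p ++ inr j :: (y :: r') ++ q)).
Proof.
move=> Su Sv.
have Uu := shuffle_uniq Su; have Uv := shuffle_uniq Sv.
have Su' : shuffle M N ((p ++ y :: r') ++ inl m :: q) by rewrite -catA.
have xn : inr j \notin p ++ (y :: r') ++ inl m :: q.
  move: (notin_del Uv); apply: contra.
  by rewrite !mem_cat !inE ?mem_cat ?inE /=.
have xok : letter_ok M N (inr j) by apply: (shuffle_ok Sv); rewrite !mem_cat mem_head !orbT.
have Sdel : shuffle M N (p ++ (y :: r') ++ q) by move: (shuffle_del Su'); rewrite -catA.
have Sins : shuffle M N (p ++ inr j :: (y :: r') ++ inl m :: q).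
  apply: (shuffle_merge (x := inr j) (s1 := p ++ (y :: r') ++ inl m :: q) (s2 := p ++ inr j :: (y :: r') ++ q)) => //.
  - have -> : p ++ inr j :: (y :: r') ++ inl m :: q = p ++ [:: inr j] ++ ((y :: r') ++ inl m :: q) by [].
    by rewrite perm_catCA.
  - by rewrite pmap_del_none.
  - have -> : p ++ inr j :: (y :: r') ++ inl m :: q = (p ++ inr j :: y :: r') ++ inl m :: q by rewrite -catA.
    by rewrite pmap_del_none // -catA.
have Uins := shuffle_uniq Sins.
have Cud : shcover M N (p ++ (y :: r') ++ inl m :: q) (p ++ (y :: r') ++ q).
  by move: (mk_del Su'); rewrite -!catA.
have Cdv : shcover M N (p ++ (y :: r') ++ q) (p ++ inr j :: (y :: r') ++ q) by apply: mk_ins.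
have Cui : shcover M N (p ++ (y :: r') ++ inl m :: q) (p ++ inr j :: (y :: r') ++ inl m :: q) by apply: mk_ins.
have Sins' : shuffle M N ((p ++ inr j :: y :: r') ++ inl m :: q) by rewrite -catA.
have Civ : shcover M N (p ++ inr j :: (y :: r') ++ inl m :: q) (p ++ inr j :: (y :: r') ++ q).
  by move: (mk_del Sins'); rewrite -!catA.
set l := DL used (ohead (rev (y :: r'))) (inl m).
have lin : l \in p ++ (y :: r') ++ inl m :: q.
  apply: DL_in; first by rewrite !mem_cat mem_head !orbT.
  by move=> z /ohead_rev_mem H; rewrite !mem_cat H orbT.
have lok : letter_ok M N l by apply: (shuffle_ok Su).
have lx : l <> inr j by move=> E; move: xn; rewrite -E lin.
have Ldel : labf used (p ++ (y :: r') ++ inl m :: q) (p ++ inr j :: (y :: r') ++ q) (p ++ (y :: r') ++ q) = (l, inr j).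
  rewrite /labf (ins_step _ Uv); congr pair.
  by have := del_step used (shuffle_uniq Su'); rewrite -!catA /= ohead_rev_cat.
have Lins : labf used (p ++ (y :: r') ++ inl m :: q) (p ++ inr j :: (y :: r') ++ q) (p ++ inr j :: (y :: r') ++ inl m :: q) = (inr j, l).
  rewrite /labf (ins_step _ Uins) del_pred_ins; congr pair.
  have := del_step (fun k => used k || (None == Some (inr k))) (shuffle_uniq Sins').
  rewrite -!catA /= => ->.
  rewrite ohead_rev_cat (ohead_rev_cat [:: inr j]).
  by apply: DL_irrel => k _; rewrite orbF.
left; exists (p ++ (y :: r') ++ q), (p ++ inr j :: (y :: r') ++ inl m :: q).
split; first by move/(f_equal size); s1lia.
split.
  move=> w; split.
    have rn : y :: r' <> [::] by [].
    by case=> C1 C2; apply: (ML_char rn Su Sv C1 C2).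
  by case=> ->.
by exists l, (inr j); do 3 (split => //).
Qed.
Ltac fin0 H Su Sv Hu := rewrite -?catA /= in Su Sv Hu H *; apply: H => //.

Lemma core M N used u w0 v :
  shcover M N u w0 -> shcover M N w0 v ->
  (forall k, inr k \notin u -> used k = false) ->
  Goal M N u v (labf used u v).
Proof.
move=> C1 C2 Hu.
have Su : shuffle M N u by case: C1.
have Sv : shuffle M N v by case: C2 => _ [].
case: C1 => _ [_ [[s1 [s2 [c [E1 E2]]]]|[s1 [s2 [c [E1 E2]]]]]];
case: C2 => _ [_ [[t1 [t2 [d [E3 E4]]]]|[t1 [t2 [d [E3 E4]]]]]]; subst u v.
-
  case: (split_cat (etrans (esym E2) E3)) => [[|z r0] [[e1 e2]|[e1 e2]]].
  + rewrite cats0 in e1; subst s1; rewrite /= in e2; subst s2.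
    by have H := @conf_DD M N used t1 [::] t2 c d; rewrite /= in H; apply: H.
  + rewrite cats0 in e1; subst t1 s2.
    by have H := @conf_DD M N used s1 [::] t2 c d; rewrite /= in H; apply: H.
  + case: e2 => e2 e3; subst z s1 t2.
    have H := @conf_DD M N used t1 r0 s2 d c; rewrite -!catA /= in Su Hu *; apply: H => //.
  + subst t1 s2.
    have H := @conf_DD M N used s1 (z :: r0) t2 c d; rewrite -!catA /= in Su Hu *; apply: H => //.
-
  case: (split_cat (etrans (esym E2) E3)) => [[|y r'] [[e1 e2]|[e1 e2]]].
  + rewrite cats0 in e1; subst s1 t2.
    have H := @conf_MR M N used t1 [::] s2 c d; fin0 H Su Sv Hu.
  + rewrite cats0 in e1; subst t1 s2.
    have H := @conf_MR M N used s1 [::] t2 c d; fin0 H Su Sv Hu.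
  + subst s1 t2.
    have H := @conf_ML M N used t1 y r' s2 c d; fin0 H Su Sv Hu.
  + subst t1 s2.
    have H := @conf_MR M N used s1 (y :: r') t2 c d; fin0 H Su Sv Hu.
-
  case: (wsplit (x := inr c) (a := inl d) _ (etrans (esym E2) E3)) => // [[r1 [e1 e2]]|[[|y r'] [e1 e2]]].
  + subst s1 t2.
    have H := @conf_MR M N used t1 r1 s2 d c; fin0 H Su Sv Hu.
  + subst t1 s2.
    have H := @conf_MR M N used s1 [::] t2 d c; fin0 H Su Sv Hu.
  + subst t1 s2.
    have H := @conf_ML M N used s1 y r' t2 d c; fin0 H Su Sv Hu.
-
  case: (split_cat (etrans (esym E2) E3)) => [[|z r0] [[e1 e2]|[e1 e2]]].
  + rewrite cats0 in e1; subst s1 t2.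
    have H := @conf_II M N used t1 [::] s2 d c; fin0 H Su Sv Hu.
  + rewrite cats0 in e1; rewrite /= in e2; subst t1 t2.
    have H := @conf_II M N used s1 [::] s2 d c; fin0 H Su Sv Hu.
  + subst s1 t2.
    have H := @conf_II M N used t1 (z :: r0) s2 d c; fin0 H Su Sv Hu.
  + subst t1; case: e2 => e2 e3; subst z s2.
    have H := @conf_II M N used s1 r0 t2 c d; fin0 H Su Sv Hu.
Qed.
Theorem lemma3p2 (M N : nat) (u v : word) (lo hi : seq word) :
  cpath (shcover M N) (hat0 M) lo -> last (hat0 M) lo = u ->
  cpath (shcover M N) v hi -> last v hi = hat1 N ->
  rank_two M N u v ->
  let lab (w : word) :=
    (Lambda (hat0 M :: lo ++ w :: v :: hi) (size lo),
     Lambda (hat0 M :: lo ++ w :: v :: hi) (size lo).+1) in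
  (* (1) interval isomorphic to C_2 x C_2 *)
  (exists w1 w2 : word, w1 <> w2 /\
     (forall w, (shcover M N u w /\ shcover M N w v) <-> (w = w1 \/ w = w2)) /\
     exists l1 l2 : letter, letter_ok M N l1 /\ letter_ok M N l2 /\ l1 <> l2 /\
       lab w1 = (l1, l2) /\ lab w2 = (l2, l1))
  \/
  (* (2) interval isomorphic to Pi_3 *)
  (exists w1 w2 w3 : word, w1 <> w2 /\ w1 <> w3 /\ w2 <> w3 /\
     (forall w, (shcover M N u w /\ shcover M N w v) <-> (w = w1 \/ w = w2 \/ w = w3)) /\
     exists (j : nat) (l : letter), (0 < j <= N) /\ letter_ok M N l /\ l <> inr j /\
       lab w1 = (inr j, l) /\ lab w2 = (l, inr j) /\ lab w3 = (inr j, inr j)).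
Proof.
move=> Clo Elo _ _ [[w0 [C1 C2]] _] lab.
change (Goal M N u v lab).
apply: (Goal_ext (g := labf (usedf (hat0 M) lo) u v)).
  by move=> w; rewrite /lab; case: (lab_eq (hat0 M) lo w v hi) => -> ->; rewrite Elo.
apply: (core C1 C2) => k Hk.
by apply: (used_false Clo); rewrite Elo.
Qed.
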